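(* For all natural numbers $n\geq 1$, \[a_4(n)=4p(n)-p(n+1)-2p(n+2)-2p(n+3)+p(n+4)+2p(n+5)-p(n+6).\]
   Context: $p(n)$ denotes the number of partitions of $n$. $a_4(n)$ denotes the number of partitions of $n$ in which the smallest part occurs at least $4$ times. *)

(* Defs.v *)
From mathcomp Require Import all_boot all_order all_algebra.
Set Implicit Arguments. Unset Strict Implicit. Unset Printing Implicit Defensive.

(* A partition of n is represented by its parts padded with zeros to length n:
   a nonincreasing n-tuple (l_1 >= ... >= l_n >= 0) of naturals (each <= n)
   summing to n.  The parts of the partition are the nonzero entries. *)
Definition is_partition (n : nat) (t : n.-tuple 'I_n.+1) : bool :=
  sorted (fun x y : nat => y <= x) (map (@nat_of_ord _) t)
  && (sumn (map (@nat_of_ord _) t) == n).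

Definition parts (n : nat) (t : n.-tuple 'I_n.+1) : seq nat :=
  [seq x <- map (@nat_of_ord _) t | 0 < x].

(* the smallest part (meaningful when the partition is nonempty, i.e. n >= 1) *)
Definition smallest_part (s : seq nat) : nat := foldr minn (head 0 s) s.

Definition p (n : nat) : nat := #|[pred t : n.-tuple 'I_n.+1 | is_partition t]|.

Definition a4 (n : nat) : nat :=
  #|[pred t : n.-tuple 'I_n.+1 | is_partition t &&
      (4 <= count_mem (smallest_part (parts t)) (parts t))]|.

(* Main.v *)
Require Import Defs.
From mathcomp Require Import all_boot all_order all_algebra.
From mathcomp Require Import zify.

Fixpoint genf (f m N : nat) : seq (seq nat) :=
  if f is f'.+1 then
    if N == 0 then [:: [::]]
    else flatten [seq map (cons i) (genf f' i (N - i)) | i <- iota m (N.+1 - m)]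
  else [::].

Definition gen m N := genf N.+1 m N.
Definition cnt m N := size (gen m N).

Lemma genfS f m N : genf f.+1 m N = if N == 0 then [:: [::]]
    else flatten [seq map (cons i) (genf f i (N - i)) | i <- iota m (N.+1 - m)].
Proof. by []. Qed.

Lemma genf_stable f m N : N < f -> 0 < m -> genf f m N = genf f.+1 m N.
Proof.
elim: f m N => [//|f IH] m N hN hm.
rewrite (genfS f) (genfS f.+1); case: eqP => // N0; congr flatten; apply/eq_in_map => i.
rewrite mem_iota => /andP[h1 h2]; rewrite IH //; [lia | lia].
Qed.

Lemma genf_gen f m N : N < f -> 0 < m -> genf f m N = gen m N.
Proof.
move=> hf hm; rewrite /gen; have [d ->] : exists d, f = N.+1 + d by exists (f - N.+1); lia.
elim: d => [|d IH]; first by rewrite addn0.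
by rewrite addnS -genf_stable // ?IH //; lia.
Qed.

Lemma gen0 m : gen m 0 = [:: [::]].
Proof. by []. Qed.

Lemma genS m N : 0 < m -> 0 < N ->
  gen m N = flatten [seq map (cons i) (gen i (N - i)) | i <- iota m (N.+1 - m)].
Proof.
move=> hm hN; rewrite /gen genfS; case: eqP => [|_]; first lia.
congr flatten; apply/eq_in_map => i; rewrite mem_iota => /andP[h1 h2].
rewrite genf_gen //; lia.
Qed.

Lemma gen_rec m N : 0 < m -> m <= N ->
  gen m N = map (cons m) (gen m (N - m)) ++ gen m.+1 N.
Proof.
move=> hm hN; rewrite genS //; last lia.
rewrite (@genS m.+1 N) //; last lia.
have -> : N.+1 - m = (N - m).+1 by lia.
by rewrite /= subSS.
Qed.

Lemma gen_nil m N : 0 < N -> N < m -> gen m N = [::].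
Proof.
move=> hN hm; rewrite genS //; last lia.
by have -> : N.+1 - m = 0 by lia.
Qed.

Lemma mem_gen m N s : 0 < m -> (s \in gen m N) = path leq m s && (sumn s == N).
Proof.
elim: N {-2}N (leqnn N) m s => [|K IHK] N hN m s hm.
  have -> : N = 0 by lia.
  rewrite gen0 inE; case: s => //= x s; apply/esym/andP => -[h1 /eqP h2]; lia.
case: (posnP N) => [->|Npos].
  rewrite gen0 inE; case: s => //= x s; apply/esym/andP => -[h1 /eqP h2]; lia.
rewrite genS //; apply/flatten_mapP/idP.
  move=> [i]; rewrite mem_iota => /andP[h1 h2] /mapP[s' hs' ->].
  rewrite IHK in hs'; [|lia|lia].
  move: hs' => /andP[hp /eqP hs]; rewrite /= h1 hp /=; apply/eqP; lia.
case: s => [/andP[_ /eqP h]|x s /= /andP[/andP[h1 h2] /eqP h3]]; first (exfalso; simpl in h; lia).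
exists x; first by rewrite mem_iota; apply/andP; split; lia.
apply/mapP; exists s => //; rewrite IHK; [|lia|lia].
rewrite h2 /=; apply/eqP; lia.
Qed.

Lemma uniq_gen m N : 0 < m -> uniq (gen m N).
Proof.
elim: N {-2}N (leqnn N) m => [|K IHK] N hN m hm.
  by have -> : N = 0 by lia.
case: (posnP N) => [->//|Npos].
suff H : forall k m, N < m + k -> 0 < m -> uniq (gen m N) by apply: (H N.+1); lia.
elim=> [|k IHk] m' hk hm'.
  by rewrite gen_nil //; lia.
case: (leqP m' N) => hmN; last by rewrite gen_nil.
rewrite gen_rec // cat_uniq IHk ?andbT; [|lia|lia].
rewrite map_inj_uniq ?IHK //; [|lia|by move=> a b []].
apply/hasPn => s; rewrite mem_gen //.
move=> /andP[hp _]; apply/mapP => -[s' _ hs]; subst s.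
by move: hp => /= /andP[h _]; move: h; rewrite ltnn.
Qed.

Lemma cnt_rec m N : 0 < m -> cnt m N = cnt m.+1 N + (if m <= N then cnt m (N - m) else 0).
Proof.
move=> hm; rewrite /cnt; case: leqP => h.
  by rewrite gen_rec // size_cat size_map addnC.
case: (posnP N) => [->|Np]; first by rewrite !gen0.
by rewrite !gen_nil //; lia.
Qed.

Lemma cntE m j N : 0 < m ->
  count (fun s => j <= count_mem m s) (gen m N) = if j * m <= N then cnt m (N - j * m) else 0.
Proof.
move=> hm; elim: j N => [|j IH] N.
  by rewrite mul0n subn0 leq0n /cnt count_predT.
case: (posnP N) => [->|Np].
  rewrite gen0 /= ifF //; apply/negbTE; rewrite -ltnNge; lia.
case: (leqP m N) => hmN; last first.
  rewrite gen_nil // ifF //; apply/negbTE; rewrite -ltnNge; lia.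
rewrite gen_rec // count_cat count_map.
have E : count (preim (cons m) (fun s => j < count_mem m s)) (gen m (N-m)) =
  count (fun s => j <= count_mem m s) (gen m (N-m)).
  by apply: eq_count => s; rewrite /= eqxx.
rewrite E.
rewrite IH (eq_in_count (a2 := pred0)); last first.
  move=> s; rewrite mem_gen // => /andP[hp _] /=.
  suff -> : count_mem m s = 0 by [].
  apply/count_memPn; apply/negP => hin.
  move: hp; rewrite path_sortedE; last exact: leq_trans.
  by move=> /andP[/allP /(_ _ hin)]; rewrite ltnn.
rewrite count_pred0 addn0 mulSn.
have -> : (j * m <= N - m) = (m + j * m <= N) by apply/idP/idP; lia.
by rewrite subnDA.
Qed.

Lemma cntD k m N : 0 < k -> 0 < m ->
  count (fun s => k <= count_mem (head 0 s) s) (gen m N) =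
  \sum_(m <= i < N.+1) (if k * i <= N then cnt i (N - k * i) else 0).
Proof.
move=> hk; case: (posnP N) => [-> hm|Np].
  by rewrite gen0 big_geq //=; case: k hk.
suff H : forall d m, N < m + d -> 0 < m -> count (fun s => k <= count_mem (head 0 s) s) (gen m N) =
  \sum_(m <= i < N.+1) (if k * i <= N then cnt i (N - k * i) else 0).
  by move=> hm; apply: (H N.+1); lia.
elim=> [|d IH] m' hd hm'.
  by rewrite gen_nil ?big_geq //; lia.
case: (leqP m' N) => hmN; last by rewrite gen_nil ?big_geq.
rewrite gen_rec // count_cat count_map IH; [|lia|lia].
rewrite [in RHS]big_ltn; last lia.
congr (_ + _).
have E : count (preim (cons m') (fun s => k <= count_mem (head 0 s) s)) (gen m' (N-m')) =
  count (fun s => k.-1 <= count_mem m' s) (gen m' (N-m')).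
  by apply: eq_count => s; rewrite /= eqxx; lia.
rewrite E.
rewrite cntE //.
have -> : (k.-1 * m' <= N - m') = (k * m' <= N).
  have -> : k = k.-1.+1 by lia.
  rewrite mulSn /=; apply/idP/idP; lia.
case: ifP => // _; congr cnt.
have -> : k = k.-1.+1 by lia.
rewrite mulSn /= subnDA; lia.
Qed.

Definition B k n := \sum_(1 <= i < n.+1) (if k * i <= n then cnt i (n - k * i) else 0).

Lemma B_ext k n M : 0 < k -> n < M ->
  B k n = \sum_(1 <= i < M) (if k * i <= n then cnt i (n - k * i) else 0).
Proof.
move=> hk hM; rewrite /B (@big_cat_nat _ _ _ n.+1 1 M) //=.
rewrite (_ : \sum_(n.+1 <= i < M) (if k * i <= n then cnt i (n - k * i) else 0) = 0) ?addn0 //.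
rewrite big_nat_cond big1 // => i /andP[/andP[h1 h2] _].
rewrite ifF //; apply/negbTE; rewrite -ltnNge; nia.
Qed.

Lemma B_rec j n : B j.+1 n + cnt 1 n = B j.+1 (n + j.+1) + B j.+2 n.
Proof.
rewrite (@B_ext j.+1 n (n + j.+3)) //; last lia.
rewrite (@B_ext j.+1 (n + j.+1) (n + j.+3).+1) //; last lia.
rewrite (@B_ext j.+2 n (n + j.+3)) //; last lia.
rewrite big_nat_recl; last lia.
rewrite muln1 (_ : n + j.+1 - j.+1 = n); last lia.
rewrite (_ : j.+1 <= n + j.+1); last lia.
rewrite -addnA addnC; congr (_ + _).
rewrite -big_split /=; apply: eq_big_nat => i /andP[hi _].
case: (leqP (j.+1 * i) n) => h.
  have -> : j.+1 * i.+1 <= n + j.+1 by nia.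
  have -> : n + j.+1 - j.+1 * i.+1 = n - j.+1 * i by nia.
  rewrite (@cnt_rec i) //; congr (_ + _).
  have -> : (i <= n - j.+1 * i) = (j.+2 * i <= n) by apply/idP/idP; nia.
  case: ifP => // _; congr cnt; nia.
rewrite !ifF //; apply/negbTE; rewrite -ltnNge; nia.
Qed.

Definition phi n (t : n.-tuple 'I_n.+1) : seq nat := rev (parts t).
Arguments phi {n}.

Definition ge_rel := fun x y : nat => y <= x.

Lemma ge_trans : transitive ge_rel.
Proof. move=> x y z h1 h2; rewrite /ge_rel in h1 h2 *; lia. Qed.

Lemma sumn_filter_pos s : sumn [seq x <- s | 0 < x] = sumn s.
Proof. by elim: s => //= x s IH; case: x => //= x; rewrite IH. Qed.

Lemma sorted_split (s : seq nat) : sorted ge_rel s ->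
  s = [seq x <- s | 0 < x] ++ nseq (size s - size [seq x <- s | 0 < x]) 0.
Proof.
elim: s => //= x s IH hp.
have hs := path_sorted hp.
case: x hp => [|x] hp /=.
  move: hp; rewrite path_sortedE; last exact: ge_trans.
  move=> /andP[hall _].
  have h0 : all (pred1 0) s by apply: sub_all hall => y; rewrite /ge_rel /= leqn0.
  move/all_pred1P: h0 => e; rewrite e; set k := size s.
  by rewrite filter_nseq /= size_nseq.
congr cons; rewrite {1}(IH hs); congr (_ ++ nseq _ _); lia.
Qed.

Lemma phi_inj n (t1 t2 : n.-tuple 'I_n.+1) :
  is_partition t1 -> is_partition t2 -> phi t1 = phi t2 -> t1 = t2.
Proof.
move=> /andP[s1 _] /andP[s2 _] e.
have e' : parts t1 = parts t2 by rewrite -[parts t1]revK -[parts t2]revK; congr rev.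
apply: val_inj; apply: (inj_map val_inj).
rewrite (sorted_split _ s1) (sorted_split _ s2) !size_map !size_tuple.
by move: e'; rewrite /parts => ->.
Qed.

Lemma phi_gen n (t : n.-tuple 'I_n.+1) : is_partition t -> phi t \in gen 1 n.
Proof.
move=> /andP[hs /eqP hsum]; rewrite mem_gen // path_sortedE; last exact: leq_trans.
rewrite /phi /parts all_rev rev_sorted sumn_rev sumn_filter_pos hsum eqxx andbT.
apply/andP; split; first exact: filter_all.
exact: (sorted_filter ge_trans).
Qed.

Lemma size_le_sumn (s : seq nat) : all (fun x => 0 < x) s -> size s <= sumn s.
Proof. elim: s => //= x s IH /andP[h1 h2]; have := IH h2; lia. Qed.

Lemma mem_le_sumn (s : seq nat) x : x \in s -> x <= sumn s.
Proof.
elim: s => //= y s IH; rewrite inE => /orP[/eqP ->|h]; first lia.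
have := IH h; lia.
Qed.

Lemma path_nseq0 x k : path ge_rel x (nseq k 0).
Proof. elim: k x => //= k IH x; rewrite IH andbT /ge_rel; lia. Qed.

Lemma path_cat0 x u k : path ge_rel x u -> path ge_rel x (u ++ nseq k 0).
Proof.
elim: u x => [|y u IH] x /=; first by rewrite path_nseq0.
by move=> /andP[h1 h2]; rewrite h1 IH.
Qed.

Lemma gen_phi n s : s \in gen 1 n -> exists2 t : n.-tuple 'I_n.+1, is_partition t & phi t = s.
Proof.
rewrite mem_gen // path_sortedE; last exact: leq_trans.
move=> /andP[/andP[hpos hsort] /eqP hsum].
have hsz : size s <= n by rewrite -hsum; exact: size_le_sumn.
pose r := rev s ++ nseq (n - size s) 0.
have hr : size (map (fun x => inord x : 'I_n.+1) r) == n.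
  by rewrite size_map size_cat size_rev size_nseq subnKC.
have hmap : map val (Tuple hr) = r.
  rewrite /= -map_comp; apply: map_id_in => x; rewrite /= mem_cat mem_rev.
  move=> /orP[h|]; first by rewrite inordK // ltnS -hsum mem_le_sumn.
  by move=> /nseqP[-> _]; rewrite inordK.
exists (Tuple hr).
  rewrite /is_partition hmap; apply/andP; split.
    rewrite /r; case: (rev s) (rev_sorted ge_rel s) => [|y u] /=.
      by move=> _; case: (n - size s) => //= k; rewrite path_nseq0.
    by move=> h; apply: path_cat0; rewrite h; exact: hsort.
  by rewrite sumn_cat sumn_rev sumn_nseq mul0n addn0 hsum.
rewrite /phi /parts hmap /r filter_cat filter_nseq /= cats0.
by rewrite (all_filterP _) ?revK // all_rev.
Qed.

Lemma card_part n (P : pred (seq nat)) :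
  #|[pred t : n.-tuple 'I_n.+1 | is_partition t && P (phi t)]| = count P (gen 1 n).
Proof.
rewrite cardE -(size_map (@phi n)) -size_filter.
apply: perm_size; apply: uniq_perm.
- rewrite map_inj_in_uniq ?enum_uniq // => t1 t2.
  rewrite !mem_enum !inE => /andP[h1 _] /andP[h2 _]; exact: phi_inj.
- by rewrite filter_uniq // uniq_gen.
move=> s; apply/mapP/idP.
  move=> [t]; rewrite mem_enum inE => /andP[h1 h2] ->.
  by rewrite mem_filter h2 phi_gen.
rewrite mem_filter => /andP[Ps /gen_phi[t h1 h2]].
by exists t => //; rewrite mem_enum inE h1 h2 Ps.
Qed.

Lemma last_le z u : path ge_rel z u -> last z u <= z.
Proof.
elim: u z => //= w u IH z /andP[h1 h2].
by rewrite /ge_rel in h1; apply: leq_trans (IH _ h2) h1.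
Qed.

Lemma foldr_min x y u : path ge_rel x u -> x <= y -> foldr minn y (x :: u) = last x u.
Proof.
elim: u x => [|z u IH] x /=; first by move=> _ h; apply/minn_idPl.
move=> /andP[h1 h2] hxy.
have := IH z h2; rewrite /= => ->; last by rewrite /ge_rel in h1; lia.
rewrite /ge_rel in h1; apply/minn_idPr; exact: leq_trans (@last_le _ _ h2) h1.
Qed.

Lemma head_rev0 (s : seq nat) : head 0 (rev s) = last 0 s.
Proof. by case/lastP: s => //= s x; rewrite rev_rcons last_rcons. Qed.

Lemma smallest_eq n (t : n.-tuple 'I_n.+1) : is_partition t -> 0 < n ->
  smallest_part (parts t) = head 0 (phi t).
Proof.
move=> /andP[hs /eqP hsum] hn.
have hsu : sorted ge_rel (parts t) by exact: (sorted_filter ge_trans).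
have hpsum : sumn (parts t) = n by rewrite /parts sumn_filter_pos.
rewrite /phi head_rev0 /smallest_part.
move: hsu hpsum; case: (parts t) => [|x u] /=; first lia.
by move=> hp _; rewrite -/(foldr minn x (x :: u)) foldr_min.
Qed.

Lemma p_cnt N : p N = cnt 1 N.
Proof.
rewrite /p /cnt -(count_predT (gen 1 N)) -(card_part N predT).
by apply: eq_card => t; rewrite !inE andbT.
Qed.

Lemma a4_B n : 0 < n -> a4 n = B 4 n.
Proof.
move=> hn; rewrite /B -cntD // -card_part.
apply: eq_card => t; rewrite !inE.
case h: (is_partition t) => //=.
by rewrite smallest_eq // /phi count_rev.
Qed.

Lemma B1_eq N : 0 < N -> B 1 N = cnt 1 N.
Proof.
move=> hN; rewrite /B -cntD // /cnt -count_predT.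
apply: eq_in_count => s; rewrite mem_gen // => /andP[_ /eqP hs].
case: s hs => [/= h|x s _]; first lia.
by rewrite /= eqxx.
Qed.

Import GRing.Theory.
Local Open Scope ring_scope.

Theorem theorem1p5 (n : nat) (hn : (1 <= n)%N) :
  (a4 n)%:Z = 4 * (p n)%:Z - (p (n + 1)%N)%:Z - 2 * (p (n + 2)%N)%:Z - 2 * (p (n + 3)%N)%:Z
              + (p (n + 4)%N)%:Z + 2 * (p (n + 5)%N)%:Z - (p (n + 6)%N)%:Z.
Proof.
rewrite a4_B // !p_cnt.
have e1 := B_rec 2 n.
have e2 := B_rec 1 n.
have e3 := B_rec 1 (n + 3).
have e4 := B_rec 0 n.
have e5 := B_rec 0 (n + 2).
have e6 := B_rec 0 (n + 3).
have e7 := B_rec 0 (n + 5).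
have f0 := B1_eq n hn.
have f1 : B 1 (n + 1) = cnt 1 (n + 1) by apply: B1_eq; lia.
have f2 : B 1 (n + 2) = cnt 1 (n + 2) by apply: B1_eq; lia.
have f3 : B 1 (n + 3) = cnt 1 (n + 3) by apply: B1_eq; lia.
have f4 : B 1 (n + 4) = cnt 1 (n + 4) by apply: B1_eq; lia.
have f5 : B 1 (n + 5) = cnt 1 (n + 5) by apply: B1_eq; lia.
have f6 : B 1 (n + 6) = cnt 1 (n + 6) by apply: B1_eq; lia.
rewrite -!addnA in e3 e5 e6 e7.
change (3 + 2)%N with 5%N in e3; change (2 + 1)%N with 3%N in e5;
change (3 + 1)%N with 4%N in e6; change (5 + 1)%N with 6%N in e7.
lia.
Qed.
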